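(* Let $D$ be an integral domain, $n\ge0$, $u_1,\dots,u_n\in D^*$, $R_n=D[Z_0,\dots,Z_n]$ a polynomial ring in $n+1$ variables over $D$, and $a_1,\dots,a_n,b_1,\dots,b_n$ positive integers with $\gcd(a_i,b_1\cdots b_i)=1$ for each $i\in\{1,\dots,n\}$. Then $$I_n:=\big(u_1Z_1^{a_1}+Z_0^{b_1},\dots,u_nZ_n^{a_n}+Z_{n-1}^{b_n}\big)$$ is a prime ideal of $R_n$ and $Z_n\notin I_n$. *)

(* Defs.v *)
From HB Require Import structures.
From mathcomp Require Import all_boot all_order all_algebra.
From mathcomp Require Import mpoly.
Set Implicit Arguments. Unset Strict Implicit. Unset Printing Implicit Defensive.
Import GRing.Theory.
Local Open Scope ring_scope.

Definition in_ideal (R : comRingType) (m : nat) (g : 'I_m -> R) (x : R) : Prop :=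
  exists c : 'I_m -> R, x = \sum_(i < m) c i * g i.

Definition prime_ideal_gen (R : comRingType) (m : nat) (g : 'I_m -> R) : Prop :=
  ~ in_ideal g 1 /\
  forall x y : R, in_ideal g (x * y) -> in_ideal g x \/ in_ideal g y.

(* The generators of I_n in D[Z_0,...,Z_n]; index i : 'I_n stands for the
   paper's index i+1, i.e. generator u_{i+1} Z_{i+1}^{a_{i+1}} + Z_i^{b_{i+1}}. *)
Definition In_gens (D : comRingType) (n : nat) (u : 'I_n -> D)
  (a b : 'I_n -> nat) (i : 'I_n) : {mpoly D[n.+1]} :=
  u i *: 'X_(lift ord0 i) ^+ a i + 'X_(widen_ord (leqnSn n) i) ^+ b i.

(* Main.v *)
From HB Require Import structures.
From mathcomp Require Import all_boot all_order all_algebra.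
From mathcomp Require Import mpoly.
From mathcomp Require Import zify ring.
Require Import Defs.
Set Implicit Arguments. Unset Strict Implicit. Unset Printing Implicit Defensive.
Import GRing.Theory.

Definition Wt (a b : nat -> nat) (k j : nat) : nat :=
  (\prod_(0 <= i < j) b i * \prod_(j <= i < k) a i)%N.

Lemma Wt_rel a b k i : (i < k)%N -> (Wt a b k i * b i = Wt a b k i.+1 * a i)%N.
Proof.
move=> lt; rewrite /Wt big_nat_recr //= (big_ltn lt).
set X := \prod_(0 <= j < i) b j; set Y := \prod_(i.+1 <= j < k) a j.
lia.
Qed.

Lemma nat_bezout (a B : nat) : (0 < a)%N -> coprime a B ->
  exists al be : nat, (al * a = be * B + 1)%N.
Proof.
move=> a0 cop; have [be _ dv] := Bezoutl B a0.
rewrite (eqP cop) in dv; case/dvdnP: dv => al e.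
exists al, be; lia.
Qed.

Lemma coprime_prod_nat a (F : nat -> nat) m k :
  (forall i, (m <= i < k)%N -> coprime a (F i)) -> coprime a (\prod_(m <= i < k) F i).
Proof.
move=> h; rewrite big_seq_cond; apply: (big_ind (fun x => coprime a x)) => [|x y hx hy|i].
- exact: coprimen1.
- by rewrite coprimeMr hx hy.
- by rewrite andbT mem_index_iota => /h.
Qed.

Lemma cancel_mod (A b x x' y y' : nat) : coprime A b -> (x < b)%N -> (x' < b)%N ->
  (x * A + b * y = x' * A + b * y')%N -> x = x'.
Proof.
move=> cop hx hx' e.
wlog le : x x' y y' hx hx' e / (x <= x')%N.
  move=> H; case: (leqP x x') => h; first exact: (H x x' y y' hx hx' e h).
  by symmetry; exact: (H x' x y' y hx' hx (esym e) (ltnW h)).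
have e2 : ((x' - x) * A = b * (y - y'))%N by nia.
have : (b %| (x' - x) * A)%N by rewrite e2 dvdn_mulr.
rewrite Gauss_dvdl; last by rewrite coprime_sym.
move=> dv; have: (x' - x < b)%N by lia.
move=> lt; case E: (x' - x)%N dv lt => [|d] dv lt; first lia.
have := dvdn_leq (ltn0Sn d) dv; lia.
Qed.

Lemma Wt_shift a b n j :
  Wt a b n.+1 j.+1 = (b 0 * Wt (fun i => a i.+1) (fun i => b i.+1) n j)%N.
Proof.
rewrite /Wt big_nat_recl // big_add1 /= -mulnA.
done.
Qed.

Lemma Wt_0 a b n : Wt a b n 0 = (\prod_(0 <= i < n) a i)%N.
Proof. by rewrite /Wt big_geq // mul1n. Qed.

Lemma sum_shift a b n (e : nat -> nat) :
  (\sum_(0 <= i < n.+1) e i.+1 * Wt a b n.+1 i.+1 =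
   b 0 * \sum_(0 <= i < n.+1) e i.+1 * Wt (fun i => a i.+1) (fun i => b i.+1) n i)%N.
Proof.
rewrite big_distrr /=; apply: eq_bigr => i _; rewrite Wt_shift; lia.
Qed.

Lemma Wt_inj n a b (e e' : nat -> nat) :
  (forall i, (i < n)%N -> coprime (a i) (\prod_(0 <= j < i.+1) b j)) ->
  (forall i, (i < n)%N -> e i < b i)%N ->
  (forall i, (i < n)%N -> e' i < b i)%N ->
  (\sum_(0 <= j < n.+1) e j * Wt a b n j = \sum_(0 <= j < n.+1) e' j * Wt a b n j)%N ->
  forall j, (j <= n)%N -> e j = e' j.
Proof.
elim: n a b e e' => [|n IH] a b e e' hc he he' E j hj.
  move: hj; rewrite leqn0 => /eqP ->.
  by move: E; rewrite !big_nat1 Wt_0 big_geq // !muln1.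
move: E; rewrite !(big_nat_recl _ _ _ (leq0n n.+1)) !Wt_0.
rewrite !sum_shift => E.
have b0 : (0 < b 0)%N by have := he 0 isT; lia.
have cop : coprime (\prod_(0 <= i < n.+1) a i) (b 0).
  rewrite coprime_sym; apply: coprime_prod_nat => i /andP [_ hi].
  have := hc i hi; rewrite big_nat_recl // coprimeMr => /andP [h _].
  by rewrite coprime_sym.
have e0 := cancel_mod cop (he 0 isT) (he' 0 isT) E.
move: E; rewrite e0 => /addnI /eqP; rewrite eqn_mul2l (negbTE (lt0n_neq0 b0)) /= => /eqP E.
case: j hj => [//|j hj].
apply: (IH (fun i => a i.+1) (fun i => b i.+1) (fun i => e i.+1) (fun i => e' i.+1)) => //.
- move=> i hi; have := hc i.+1 hi; rewrite big_nat_recl // coprimeMr => /andP [_ h].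
  by [].
- by move=> i hi; apply: he.
- by move=> i hi; apply: he'.
Qed.

Local Open Scope ring_scope.

Lemma coef_exists (D : comUnitRingType) (u : nat -> D) (a b : nat -> nat) k :
  (forall i, (i < k)%N -> u i \is a GRing.unit) ->
  (forall i, (i < k)%N -> (0 < a i)%N) ->
  (forall i, (i < k)%N -> coprime (a i) (\prod_(0 <= j < i.+1) b j)) ->
  exists c : nat -> D, (forall j, c j \is a GRing.unit) /\
    forall i, (i < k)%N -> c i ^+ b i = - u i * c i.+1 ^+ a i.
Proof.
elim: k => [|k IH] hu ha hc.
  by exists (fun _ => 1); split => // j; rewrite unitr1.
have [c [cu cr]] : exists c : nat -> D, (forall j, c j \is a GRing.unit) /\
    forall i, (i < k)%N -> c i ^+ b i = - u i * c i.+1 ^+ a i.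
  by apply: IH => i hi; [apply: hu|apply: ha|apply: hc]; apply: ltnW.
have uk : - u k \is a GRing.unit by rewrite unitrN hu.
pose y := c k ^+ b k * (- u k)^-1.
have yu : y \is a GRing.unit by rewrite unitrM unitrX ?cu // unitrV.
have [al [be E]] := nat_bezout (ha k (ltnSn k)) (hc k (ltnSn k)).
pose la := y ^+ be.
have lau : la \is a GRing.unit by rewrite unitrX.
exists (fun j => if (j <= k)%N then la ^+ Wt a b k j * c j else y ^+ al); split.
  by move=> j; case: ifP => _; rewrite ?unitrM ?unitrX ?cu.
move=> i hik; have [->|ne] := eqVneq i k; last first.
  have hi : (i < k)%N by rewrite ltn_neqAle ne -ltnS hik.
  clearbody la.
  rewrite (ltnW hi) hi exprMn -!exprM Wt_rel // cr // exprMn -exprM.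
  by rewrite mulrCA.
  rewrite leqnn ltnn /Wt (big_geq (leqnn k)) muln1 exprMn -!exprM mulnC E.
  rewrite big_nat_recr //= (mulnC _ (b k)) exprM.
  rewrite exprD expr1 /y -exprM [X in _ = _ * (_ ^+ X * _)]mulnC [RHS]mulrCA.
  by rewrite [- u k * _]mulrCA mulrV // mulr1.
Qed.

Section Main.
Variables (D : idomainType) (n : nat) (u : 'I_n -> D) (a b : 'I_n -> nat).
Hypothesis hu : forall i, u i \is a GRing.unit.
Hypothesis ha : forall i, (0 < a i)%N.
Hypothesis hb : forall i, (0 < b i)%N.
Hypothesis hcop : forall i : 'I_n, coprime (a i) (\prod_(j < n | (j <= i)%N) b j).

Local Notation g := (In_gens u a b).

Definition an k := oapp a 1%N (insub k).
Definition bn k := oapp b 1%N (insub k).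
Definition un k := oapp u 1 (insub k).
Lemma an_val (i : 'I_n) : an i = a i. Proof. by rewrite /an valK. Qed.
Lemma bn_val (i : 'I_n) : bn i = b i. Proof. by rewrite /bn valK. Qed.
Lemma un_val (i : 'I_n) : un i = u i. Proof. by rewrite /un valK. Qed.

Lemma hcop_nat i : (i < n)%N -> coprime (an i) (\prod_(0 <= j < i.+1) bn j).
Proof.
move=> hi; rewrite -[an i]/(an (Ordinal hi)) an_val (big_nat_widen _ _ _ _ _ hi) big_mkord.
rewrite (eq_big (fun j : 'I_n => (j <= i)%N) (fun j : 'I_n => b j)) => [|//|j _].
  exact: (hcop (Ordinal hi)).
by rewrite bn_val.
Qed.

Lemma c_ex : exists c : nat -> D, (forall j, c j \is a GRing.unit) /\
    forall i, (i < n)%N -> c i ^+ bn i = - un i * c i.+1 ^+ an i.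
Proof.
apply: coef_exists => i hi.
- by rewrite -[i]/(val (Ordinal hi)) un_val.
- by rewrite -[i]/(val (Ordinal hi)) an_val.
- exact: hcop_nat.
Qed.

Lemma in0 : in_ideal g 0.
Proof. by exists (fun _ => 0); rewrite big1 // => i _; rewrite mul0r. Qed.

Lemma inD x y : in_ideal g x -> in_ideal g y -> in_ideal g (x + y).
Proof.
move=> [c1 ->] [c2 ->]; exists (fun i => c1 i + c2 i).
by rewrite -big_split /=; apply: eq_bigr => i _; rewrite mulrDl.
Qed.

Lemma inM y x : in_ideal g x -> in_ideal g (y * x).
Proof.
move=> [c ->]; exists (fun i => y * c i).
by rewrite mulr_sumr; apply: eq_bigr => i _; rewrite mulrA.
Qed.

Lemma inZ y x : in_ideal g x -> in_ideal g (y *: x).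
Proof. by move=> h; rewrite -mul_mpolyC; apply: inM. Qed.

Lemma inG i : in_ideal g (g i).
Proof.
exists (fun j => (j == i)%:R); rewrite (bigD1 i) //= eqxx mul1r big1 ?addr0 //.
by move=> j /negbTE ->; rewrite mul0r.
Qed.


Definition redm (m : 'X_{1..n.+1}) := forall i : 'I_n, (m (widen_ord (leqnSn n) i) < b i)%N.
Definition red (p : {mpoly D[n.+1]}) := forall m, m \in msupp p -> redm m.

Definition Pw (j : 'I_n.+1) := (\prod_(j <= i < n) (an i).+1)%N.
Definition mu (m : 'X_{1..n.+1}) := (\sum_(j < n.+1) m j * Pw j)%N.

Lemma sum_ind (N : nat) (w : 'I_N) (F : 'I_N -> nat) : (\sum_(j < N) (j == w) * F j = F w)%N.
Proof.
rewrite (bigD1 w) //= eqxx mul1n big1 ?addn0 // => j /negbTE ->; by rewrite mul0n.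
Qed.

Lemma reduce_mono m : exists r, red r /\ in_ideal g ('X_[m] - r).
Proof.
move: {2}(mu m).+1 (ltnSn (mu m)) => N; elim: N m => [//|N IH] m hm.
case: (boolP [forall i : 'I_n, (m (widen_ord (leqnSn n) i) < b i)%N]) => [/forallP H|].
  exists 'X_[m]; split; last by rewrite subrr; exact: in0.
  by move=> m'; rewrite msuppX inE => /eqP ->.
rewrite negb_forall => /existsP [i]; rewrite -leqNgt => hi.
set w := widen_ord (leqnSn n) i; set l := lift ord0 i.
set m1 := (m - U_(w) *+ b i)%MM; set m' := (m1 + U_(l) *+ a i)%MM.
have hle : (U_(w) *+ b i <= m)%MM.
  apply/mnm_lepP => j; rewrite mulmnE mnm1E; by case: eqP => [<-|] /=; [rewrite mul1n|rewrite mul0n].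
have em : m = (m1 + U_(w) *+ b i)%MM by rewrite /m1 submK.
have mu_lt : (mu m' < N)%N.
have wl : w != l.
  by apply/eqP => /(congr1 val) /=; rewrite /bump /=; lia.
have pt : forall j, (m' j * Pw j + (j == w) * (b i * Pw j) = m j * Pw j + (j == l) * (a i * Pw j))%N.
  move=> j; rewrite /m' /m1 mnmDE mnmBE !mulmnE !mnm1E.
  case: (eqVneq j w) => [E1|njw]; case: (eqVneq j l) => [E2|njl].
  - by move: wl; rewrite -E1 -E2 eqxx.
  - rewrite E1 /=; have := hi; rewrite -/w; nia.
  - simpl; nia.
  - simpl; nia.
have S : (mu m' + b i * Pw w = mu m + a i * Pw l)%N.
  have s1 := sum_ind w (fun j => b i * Pw j)%N; have s2 := sum_ind l (fun j => a i * Pw j)%N.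
  simpl in s1, s2; rewrite /mu -s1 -s2 -!big_split /=.
  by apply: eq_bigr => j _; exact: pt j.
have Pwl : Pw w = ((a i).+1 * Pw l)%N.
  by rewrite /Pw /= (big_ltn (ltn_ord i)) an_val.
have Pl : (0 < Pw l)%N by apply: prodn_gt0.
have := hb i; nia.
have [r' [rr' ir']] := IH m' mu_lt.
exists ((- u i) *: r'); split.
  by move=> k /msuppZ_le /rr'.
have -> : 'X_[m] - (- u i) *: r' = 'X_[m1] * g i + (- u i) *: ('X_[m'] - r').
  rewrite em /m' !mpolyXD -!mpolyXn /In_gens -/w -/l !scaleNr -!mul_mpolyC.
  ring.
by apply: inD; [apply: inM; apply: inG | apply: inZ].
Qed.

Lemma reduce_all p : exists r, red r /\ in_ideal g (p - r).
Proof.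
elim/mpolyind: p => [|c m p _ _ [rp [redp ip]]].
  by exists 0; split; [move=> m; rewrite msupp0 | rewrite subrr; exact: in0].
have [rm [redm' im]] := reduce_mono m.
exists (c *: rm + rp); split.
  move=> k /msuppD_le; rewrite mem_cat => /orP [/msuppZ_le /redm'|/redp] //.
have -> : c *: 'X_[m] + p - (c *: rm + rp) = c *: ('X_[m] - rm) + (p - rp).
  by rewrite scalerBr; rewrite opprD !addrA; congr (_ + _); rewrite -!addrA; congr (_ + _); rewrite addrC.
by apply: inD => //; apply: inZ.
Qed.

Section Phi.
Variable c : nat -> D.
Hypothesis cu : forall j, c j \is a GRing.unit.
Hypothesis cr : forall i, (i < n)%N -> c i ^+ bn i = - un i * c i.+1 ^+ an i.

Definition wt (j : nat) := Wt an bn n j.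
Definition h (j : 'I_n.+1) : {poly D} := (c j)%:P * 'X^(wt j).
Local Notation phi := (mmap (@polyC D) h).
Definition cm (m : 'X_{1..n.+1}) := \prod_(j < n.+1) c j ^+ m j.
Definition wd (m : 'X_{1..n.+1}) := (\sum_(j < n.+1) m j * wt j)%N.

Lemma phiX m : phi 'X_[m] = (cm m)%:P * 'X^(wd m).
Proof.
rewrite mmapX /mmap1 /h.
under eq_bigr do rewrite exprMn -rmorphXn /= -exprM.
rewrite big_split /= -rmorph_prod prodrXr /cm /wd.
by congr (_ * 'X^_); apply: eq_bigr => j _; rewrite mulnC.
Qed.

Lemma mmap1_eq m : mmap1 h m = (cm m)%:P * 'X^(wd m).
Proof. by have := phiX m; rewrite mmapX. Qed.

Lemma phig i : phi (g i) = 0.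
Proof.
rewrite /In_gens rmorphD /= mmapZ !rmorphXn /= !mmapX !mmap1U /h lift0 /=.
rewrite !exprMn -!rmorphXn -!exprM.
have e := Wt_rel an bn (ltn_ord i).
rewrite -an_val -bn_val -un_val /wt -e mulrA -rmorphM -mulrDl -rmorphD cr //.
by rewrite mulNr addrN rmorph0 mul0r.
Qed.

Lemma phi_ideal p : in_ideal g p -> phi p = 0.
Proof.
move=> [d ->]; rewrite rmorph_sum big1 // => i _.
by rewrite rmorphM /= phig mulr0.
Qed.

Lemma redm_inj m m' : redm m -> redm m' -> wd m = wd m' -> m = m'.
Proof.
move=> r1 r2 E; apply/mnmP => j.
have hj : (j <= n)%N by rewrite -ltnS.
have key := @Wt_inj n an bn (fun k => m (inord k)) (fun k => m' (inord k)) hcop_nat.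
rewrite -[j]inord_val; apply: (key _ _ _ _ hj).
- move=> i hi; have := r1 (Ordinal hi); rewrite -[bn i]/(bn (Ordinal hi)) bn_val.
  suff -> : widen_ord (leqnSn n) (Ordinal hi) = inord i by [].
  by apply: val_inj; rewrite /= inordK //; lia.
- move=> i hi; have := r2 (Ordinal hi); rewrite -[bn i]/(bn (Ordinal hi)) bn_val.
  suff -> : widen_ord (leqnSn n) (Ordinal hi) = inord i by [].
  by apply: val_inj; rewrite /= inordK //; lia.
- have eqs : forall mm : 'X_{1..n.+1},
    (\sum_(0 <= j0 < n.+1) mm (inord j0) * Wt an bn n j0)%N = wd mm.
    by move=> mm; rewrite big_mkord; apply: eq_bigr => k _; rewrite inord_val.
  by rewrite !eqs.
Qed.

Lemma cm_unit m : cm m \is a GRing.unit.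
Proof.
rewrite /cm; apply: (big_ind (fun x => x \is a GRing.unit)) => [|x y hx hy|j _].
- exact: unitr1.
- by rewrite unitrM hx hy.
- by rewrite unitrX.
Qed.

Lemma phi_red0 r : red r -> phi r = 0 -> r = 0.
Proof.
move=> rr E; apply/mpolyP => m0; rewrite mcoeff0.
case: (boolP (m0 \in msupp r)) => [hm|]; last by move/memN_msupp_eq0.
have : (phi r)`_(wd m0) = r@_m0 * cm m0.
  rewrite /mmap coef_sum (bigD1_seq m0) //= ?msupp_uniq //.
  rewrite mmap1_eq !coefCM coefXn eqxx mulr1 big1_seq ?addr0 //.
  move=> m /andP [ne hm']; rewrite mmap1_eq !coefCM coefXn.
  case: eqP => [e|]; last by rewrite !mulr0.
  by move: ne; rewrite (redm_inj (rr _ hm') (rr _ hm) (esym e)) eqxx.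
rewrite E coef0 => /esym/eqP; rewrite mulf_eq0 => /orP [/eqP //|/eqP c0].
by have := cm_unit m0; rewrite c0 unitr0.
Qed.

Lemma phi_kernel p : phi p = 0 -> in_ideal g p.
Proof.
move=> E; have [r [rr ir]] := reduce_all p.
have : phi r = 0.
  by have := phi_ideal ir; rewrite rmorphB /= E sub0r => /eqP; rewrite oppr_eq0 => /eqP.
move/(phi_red0 rr) => r0; by move: ir; rewrite r0 subr0.
Qed.

End Phi.

End Main.

Unset Implicit Arguments.
Theorem lemma4p1 (D : idomainType) (n : nat) (u : 'I_n -> D)
  (a b : 'I_n -> nat)
  (hu : forall i, u i \is a GRing.unit)
  (ha : forall i, (0 < a i)%N) (hb : forall i, (0 < b i)%N)
  (hcop : forall i : 'I_n, coprime (a i) (\prod_(j < n | (j <= i)%N) b j)) :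
  prime_ideal_gen (In_gens u a b) /\
  ~ in_ideal (In_gens u a b) ('X_(@ord_max n)).
Proof.
have [c [cu cr]] := c_ex hu ha hcop.
have K1 := phi_ideal cr.
have K2 := phi_kernel hb hcop cu cr.
split; [split|].
- move/K1; rewrite rmorph1 => /eqP; by rewrite oner_eq0.
- move=> x y /K1; rewrite rmorphM /= => /eqP; rewrite mulf_eq0 => /orP [/eqP E|/eqP E].
  + by left; apply: K2.
  + by right; apply: K2.
- move/K1; rewrite mmapX mmap1U /h => E.
  have := congr1 (fun p : {poly D} => p`_(wt a b n)) E.
  rewrite /= coefCM coefXn eqxx mulr1 coef0 => c0.
  by have := cu n; rewrite c0 unitr0.
Qed.
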